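(* Let $S$ be a set, let $f:2^S\to 2^S$ be monotonic with respect to $\subseteq$, and let $X\subseteq S$. Then $X$ is supported for $f$ if and only if $X\subseteq f(X)$.
   Context: For a binary relation ${\prec}$ on $X$ and $x\in X$, $\prec^{-1}(x)=\{x'\in X\mid x'\prec x\}$. A pair $(X,\prec)$ is a support ordering for $f$ if $X\subseteq S$, ${\prec}\subseteq X\times X$, and $x\in f(\prec^{-1}(x))$ for every $x\in X$. A set $X\subseteq S$ is supported for $f$ if there is some relation ${\prec}\subseteq X\times X$ such that $(X,\prec)$ is a support ordering for $f$. *)

(* Defs.v *)
Set Implicit Arguments.

Definition subset {S : Type} (A B : S -> Prop) : Prop := forall x, A x -> B x.

Definition monotonic {S : Type} (f : (S -> Prop) -> (S -> Prop)) : Prop :=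
  forall A B, subset A B -> subset (f A) (f B).

Definition preimage_rel {S : Type} (prec : S -> S -> Prop) (x : S) : S -> Prop :=
  fun x' => prec x' x.

Definition support_ordering {S : Type} (f : (S -> Prop) -> (S -> Prop))
  (X : S -> Prop) (prec : S -> S -> Prop) : Prop :=
  (forall x y, prec x y -> X x /\ X y) /\
  (forall x, X x -> f (preimage_rel prec x) x).

Definition supported {S : Type} (f : (S -> Prop) -> (S -> Prop)) (X : S -> Prop) : Prop :=
  exists prec : S -> S -> Prop, support_ordering f X prec.

(* Main.v *)
Require Import Defs.

Theorem theorem2 (S : Type) (f : (S -> Prop) -> (S -> Prop)) (X : S -> Prop) :
  monotonic f -> (supported f X <-> subset X (f X)).
Proof.
  intros Hm; split.
  - intros [prec [H1 H2]] x Hx.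
    apply (Hm (preimage_rel prec x) X).
    + intros y Hy. exact (proj1 (H1 y x Hy)).
    + exact (H2 x Hx).
  - intros H. exists (fun x y => X x /\ X y). split.
    + intros x y Hxy; exact Hxy.
    + intros x Hx. apply (Hm X).
      * intros y Hy. unfold preimage_rel. auto.
      * exact (H x Hx).
Qed.
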